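(* For the path $P_n$ on $n\ge 2$ vertices, $b_{OCD}(P_n)=1$ if $n=2$, $b_{OCD}(P_n)=2$ if $n=3$, and $b_{OCD}(P_n)=\lceil n/3\rceil-1$ if $n\ge 4$.
   Context: A set $S\subseteq V$ is a dominating set of a graph $G=(V,E)$ if every vertex not in $S$ is adjacent to a vertex of $S$. A set $\tilde D\subseteq V$ is an outer-connected dominating set of $G$ if $\tilde D$ is dominating and the induced subgraph $G[V\setminus\tilde D]$ is connected (the empty graph counts as connected). $\tilde\gamma_c(G)$ is the minimum size of an outer-connected dominating set. For a graph $G$ without isolated vertices, the outer-connected bondage number $b_{OCD}(G)$ is the minimum number of edges whose removal from $G$ yields a graph $G'$ with $\tilde\gamma_c(G')>\tilde\gamma_c(G)$. *)

(* Defs.v *)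
(* Simple graphs on a finite vertex type T, given by an edge
   set E : {set {set T}} whose members are 2-element vertex sets. *)
From mathcomp Require Import all_boot.
Set Implicit Arguments. Unset Strict Implicit. Unset Printing Implicit Defensive.

Section Graphs.
Variable T : finType.

Definition adj (E : {set {set T}}) : rel T :=
  fun x y => (x != y) && ([set x; y] \in E).

Definition dominating (E : {set {set T}}) (S : {set T}) : bool :=
  [forall v, (v \notin S) ==> [exists u, (u \in S) && adj E u v]].

(* the induced subgraph G[A] is connected (the empty graph counts as connected) *)
Definition induced_connected (E : {set {set T}}) (A : {set T}) : bool :=
  [forall x in A, forall y in A,
     connect (fun u v => [&& u \in A, v \in A & adj E u v]) x y].

Definition ocd (E : {set {set T}}) (D : {set T}) : bool :=
  dominating E D && induced_connected E (~: D).

(* outer-connected domination number: minimum size of an OCD set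
   (the full vertex set is always an OCD set, so the default #|T| is harmless) *)
Definition gamma_oc (E : {set {set T}}) : nat :=
  \big[minn/#|T|]_(D : {set T} | ocd E D) #|D|.

(* outer-connected bondage number: minimum number of edges of G whose removal
   strictly increases gamma_oc (default #|E| + 1 if no such set exists;
   never reached for graphs without isolated vertices on >= 2 vertices) *)
Definition bOCD (E : {set {set T}}) : nat :=
  \big[minn/#|E|.+1]_(F : {set {set T}} | (F \subset E) &&
                                           (gamma_oc E < gamma_oc (E :\: F)))
     #|F|.
End Graphs.

Definition path_edges (n : nat) : {set {set 'I_n}} :=
  [set [set i; j] | i in [set: 'I_n], j in [set: 'I_n] & (val i).+1 == val j].

(* Main.v *)
Require Import Defs.
From mathcomp Require Import all_boot zify.
Set Implicit Arguments. Unset Strict Implicit. Unset Printing Implicit Defensive.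

Lemma bigmin_seq_le (I : eqType) (r : seq I) (P : pred I) (F : I -> nat) d i0 :
  i0 \in r -> P i0 -> \big[minn/d]_(i <- r | P i) F i <= F i0.
Proof.
elim: r => [//|a r IH]; rewrite inE big_cons => /orP [/eqP <-|Hr] Pi.
  by rewrite Pi geq_minl.
case: (P a); last exact: IH.
by apply: leq_trans (geq_minr _ _) (IH Hr Pi).
Qed.

Lemma bigmin_le (T : finType) (P : pred T) (F : T -> nat) d i0 :
  P i0 -> \big[minn/d]_(i | P i) F i <= F i0.
Proof. by move=> Pi; apply: bigmin_seq_le => //; rewrite mem_index_enum. Qed.

Lemma bigmin_ge (T : finType) (P : pred T) (F : T -> nat) d m :
  m <= d -> (forall i, P i -> m <= F i) -> m <= \big[minn/d]_(i | P i) F i.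
Proof.
move=> Hd HF; apply: (big_ind (fun x => m <= x)) => // x y Hx Hy.
by rewrite leq_min Hx Hy.
Qed.

Lemma connect_cross (T : finType) (r : rel T) (P : pred T) x y :
  connect r x y -> P x -> ~~ P y -> exists u v, [/\ r u v, P u & ~~ P v].
Proof.
move/connectP=> [p]; elim: p x => [|z p IH] x /=.
  by move=> _ -> ->.
move=> /andP [rxz pz] ey Px Py.
case Pz: (P z); first exact: IH pz ey Pz Py.
by exists x, z; rewrite rxz Px Pz.
Qed.
Section P.
Variable n : nat.
Implicit Types E : {set {set 'I_n}}.

Lemma path_edgesP (e : {set 'I_n}) :
  reflect (exists i j : 'I_n, (val i).+1 = val j /\ e = [set i; j]) (e \in path_edges n).
Proof.
apply: (iffP idP).
  case/imset2P=> i j _; rewrite inE => /andP [_ /eqP Hij] ->. by exists i, j.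
move=> [i [j [Hij ->]]]; apply/imset2P; exists i j => //; by rewrite !inE Hij eqxx.
Qed.

Lemma adj_path E u v : E \subset path_edges n -> adj E u v ->
  (val u).+1 = val v \/ (val v).+1 = val u.
Proof.
move=> sub /andP [neq mem]; have /path_edgesP [i [j [Hij Heq]]] := subsetP sub _ mem.
have : u \in [set u; v] by rewrite !inE eqxx.
have : v \in [set u; v] by rewrite !inE eqxx orbT.
rewrite Heq => /set2P Hv /set2P Hu.
move: neq; case: Hv => ->; case: Hu => ->; rewrite ?eqxx => // _; first [by left | by right].
Qed.

Definition run4 E := exists a b c d : 'I_n,
  [/\ (a : nat).+1 = b, (b : nat).+1 = c, (c : nat).+1 = d &
   [/\ [set a; b] \in E, [set b; c] \in E & [set c; d] \in E]].

Section Core.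
Variables (E : {set {set 'I_n}}) (D : {set 'I_n}).
Hypothesis sub : E \subset path_edges n.
Hypothesis H : ocd E D.

Let conn x y : x \in ~: D -> y \in ~: D ->
  connect (fun u v => [&& u \in ~: D, v \in ~: D & adj E u v]) x y.
Proof.
move=> hx hy; case/andP: H => _ /forallP /(_ x) /implyP /(_ hx) /forallP /(_ y).
by move/implyP/(_ hy).
Qed.

Lemma step x y (z : nat) : x \in ~: D -> y \in ~: D -> x <= z < y ->
  exists u v, [/\ u \in ~: D, v \in ~: D, adj E u v, (u : nat) = z & (v : nat) = z.+1].
Proof.
move=> hx hy hz.
have [u [v [/and3P [hu hv a] Pu Pv]]] :=
  @connect_cross _ _ (fun w : 'I_n => (w : nat) <= z) _ _ (conn hx hy)
    (ltac:(by case/andP: hz)) (ltac:(by rewrite -ltnNge; case/andP: hz)).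
exists u, v; split => //; rewrite -ltnNge in Pv; case: (adj_path sub a) => /= h; lia.
Qed.

Lemma dom w : w \in ~: D -> exists u, u \in D /\ adj E u w.
Proof.
move=> hw; case/andP: H => /forallP /(_ w) /implyP.
rewrite inE in hw => /(_ hw) /existsP [u /andP [hu a]]; by exists u.
Qed.

Lemma close x y : x \in ~: D -> y \in ~: D -> (x : nat) + 2 <= y -> False.
Proof.
move=> hx hy hxy.
have [u1 [v1 [hu1 hv1 a1 eu1 ev1]]] := step (z := x) hx hy (ltac:(lia)).
have [u2 [v2 [hu2 hv2 a2 eu2 ev2]]] := step (z := (x : nat).+1) hx hy (ltac:(lia)).
have [u [hu au]] := dom hv1.
case: (adj_path sub au) => /= h.
  have : u = x by apply: val_inj; apply: succn_inj; rewrite h ev1.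
  by move=> e; move: hu hx; rewrite e inE => ->.
have : u = v2 by apply: val_inj; rewrite /= -h ev1 ev2.
by move=> e; move: hu hv2; rewrite e inE => ->.
Qed.

Lemma near x y : x \in ~: D -> y \in ~: D -> (y : nat) <= (x : nat).+1.
Proof. move=> hx hy; rewrite leqNgt; apply/negP => h; apply: (close hx hy); lia. Qed.

Lemma sub2 x y : x \in ~: D -> y \in ~: D -> x != y -> ~: D \subset [set x; y].
Proof.
move=> hx hy nxy; apply/subsetP => z hz.
have := near hx hz; have := near hz hx; have := near hy hz; have := near hz hy;
have := near hx hy; have := near hy hx.
have : (x : nat) != y by [].
rewrite !inE -!(inj_eq val_inj) /=.
move: (x : nat) (y : nat) (z : nat) => a b c; case: eqP; case: eqP => //=; lia.
Qed.

Lemma A_le2 : #|~: D| <= 2.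
Proof.
case: (ltnP 1 #|~: D|) => [/card_gt1P [x [y [hx hy nxy]]]|h]; last by apply: leq_trans h _.
apply: leq_trans (subset_leq_card (sub2 hx hy nxy)) _.
by rewrite cards2; case: (x == y).
Qed.

Lemma set2C (a b : 'I_n) : [set a; b] = [set b; a].
Proof. by apply/setP => w; rewrite !inE orbC. Qed.

Lemma run_of x y : x \in ~: D -> y \in ~: D -> (x : nat).+1 = y -> run4 E.
Proof.
move=> hx hy hxy.
have [u [hu au]] := dom hx.
have [u' [hu' au']] := dom hy.
have [u0 [v0 [_ _ a0 eu0 ev0]]] := step (z := x) hx hy (ltac:(lia)).
have e0 : u0 = x by apply: val_inj.
have e1 : v0 = y by apply: val_inj => /=; lia.
subst u0 v0.
case: (adj_path sub au) => /= h1.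
  2: { have : u = y by apply: val_inj => /=; lia.
       by move=> e; move: hu hy; rewrite e inE => ->. }
case: (adj_path sub au') => /= h2.
  have : u' = x by apply: val_inj => /=; lia.
  by move=> e; move: hu' hx; rewrite e inE => ->.
exists u, x, y, u'; split => //; split.
- by case/andP: au.
- by case/andP: a0.
- by rewrite set2C; case/andP: au'.
Qed.

Lemma A_run : 1 < #|~: D| -> run4 E.
Proof.
move=> /card_gt1P [x [y [hx hy nxy]]].
have := near hx hy; have := near hy hx.
case: (ltngtP (x : nat) y) => h.
- move=> _ h2; apply: (run_of hx hy); lia.
- move=> h2 _; apply: (run_of hy hx); lia.
- by move: nxy; rewrite -(inj_eq val_inj) /= h eqxx.
Qed.

Lemma A_edge : 0 < #|~: D| -> exists e, e \in E.
Proof.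
move/card_gt0P => [x hx]; have [u [_ /andP [_ h]]] := dom hx; by exists [set u; x].
Qed.
End Core.

Lemma cardD_ (D : {set 'I_n}) : #|D| = n - #|~: D|.
Proof. have := cardsC D; rewrite card_ord; lia. Qed.

Lemma gamma_ge E : E \subset path_edges n ->
  [/\ n - 2 <= gamma_oc E, (~ run4 E -> n - 1 <= gamma_oc E)
    & ((forall e, e \notin E) -> n <= gamma_oc E)].
Proof.
move=> sub; split.
- apply: bigmin_ge; first by rewrite card_ord leq_subr.
  move=> D hD; rewrite (cardD_ D); have := A_le2 sub hD; lia.
- move=> nr; apply: bigmin_ge; first by rewrite card_ord leq_subr.
  move=> D hD; rewrite (cardD_ D); case: (ltnP 1 #|~: D|) => h.
    by case: nr; apply: A_run hD h.
  lia.
- move=> ne; apply: bigmin_ge; first by rewrite card_ord.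
  move=> D hD; rewrite (cardD_ D); case: (ltnP 0 #|~: D|) => h.
    by have [e he] := A_edge hD h; move: (ne e); rewrite he.
  lia.
Qed.

Lemma gamma_le_run E : run4 E -> gamma_oc E <= n - 2.
Proof.
move=> [a [b [c [d [hab hbc hcd [e1 e2 e3]]]]]].
have nbc : b != c by rewrite -(inj_eq val_inj) /=; apply/eqP; lia.
apply: leq_trans (bigmin_le _ _ (i0 := ~: [set b; c]) _) _.
  apply/andP; split.
    apply/forallP => v; apply/implyP; rewrite !inE negbK => /orP [] /eqP ->.
      apply/existsP; exists a; rewrite !inE /adj e1 andbT.
      rewrite -!(inj_eq val_inj) /=; apply/andP; split; apply/eqP; lia.
    apply/existsP; exists d; rewrite !inE /adj set2C e3 andbT.
    rewrite -!(inj_eq val_inj) /=; apply/andP; split; apply/eqP; lia.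
  apply/forallP => x; apply/implyP; rewrite setCK => hx.
  apply/forallP => y; apply/implyP => hy.
  case/set2P: hx => ->; case/set2P: hy => ->; rewrite ?connect0 //; apply: connect1;
    rewrite !inE ?eqxx ?orbT /adj ?e2 ?(set2C c b) ?e2 //=; by rewrite ?nbc // eq_sym nbc.
by rewrite cardsCs setCK cards2 nbc card_ord.
Qed.

Lemma gamma_le_edge E (i j : 'I_n) : i != j -> [set i; j] \in E -> gamma_oc E <= n - 1.
Proof.
move=> nij he.
apply: leq_trans (bigmin_le _ _ (i0 := ~: [set j]) _) _.
  apply/andP; split.
    apply/forallP => v; apply/implyP; rewrite !inE negbK => /eqP ->.
    by apply/existsP; exists i; rewrite !inE /adj he nij.
  apply/forallP => x; apply/implyP; rewrite setCK => /set1P ->.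
  by apply/forallP => y; apply/implyP => /set1P ->; rewrite connect0.
by rewrite cardsCs setCK cards1 card_ord.
Qed.
End P.

Lemma bOCD_eq (T : finType) (E : {set {set T}}) (k : nat) :
  (forall F : {set {set T}}, F \subset E -> gamma_oc E < gamma_oc (E :\: F) -> k <= #|F|) ->
  k <= #|E|.+1 ->
  (exists F0 : {set {set T}}, [/\ F0 \subset E, gamma_oc E < gamma_oc (E :\: F0) & #|F0| <= k]) ->
  bOCD E = k.
Proof.
move=> lb hd [F0 [s0 c0 k0]]; apply/eqP; rewrite eqn_leq; apply/andP; split.
  by apply: leq_trans (bigmin_le _ _ (i0 := F0) _) k0; rewrite s0 c0.
by apply: bigmin_ge => // F /andP [sF cF]; apply: lb.
Qed.

Section M.
Variable m : nat.
Notation n := m.+1.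
Definition e (i : nat) : {set 'I_n} := [set inord i; inord i.+1].
Notation E := (path_edges n).

Lemma e_in i : i.+1 < n -> e i \in E.
Proof.
move=> h; apply/path_edgesP; exists (inord i), (inord i.+1); split => //=.
by rewrite !inordK //; lia.
Qed.

Lemma e_inj i j : i.+1 < n -> j.+1 < n -> e i = e j -> i = j.
Proof.
move=> hi hj h.
have hi' : inord i \in e j by rewrite -h !inE eqxx.
have hj' : inord j \in e i by rewrite h !inE eqxx.
move: hi' hj'; rewrite !inE -!(inj_eq val_inj) /= !inordK; try lia.
Qed.

Lemma count_lb (F : {set {set 'I_n}}) k (p : nat -> nat) :
  (forall j, j < k -> (p j).+1 < n /\ e (p j) \in F) ->
  (forall j1 j2, j1 < k -> j2 < k -> p j1 = p j2 -> j1 = j2) -> k <= #|F|.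
Proof.
move=> hp hinj.
have sub : [set e (p (val j)) | j in 'I_k] \subset F.
  by apply/subsetP => x /imsetP [j _ ->]; case: (hp _ (ltn_ord j)).
apply: leq_trans (subset_leq_card sub).
rewrite card_in_imset ?card_ord // => j1 j2 _ _ h; apply: val_inj.
apply: hinj; try exact: ltn_ord.
by apply: e_inj h; [case: (hp _ (ltn_ord j1)) | case: (hp _ (ltn_ord j2))].
Qed.

Lemma inE2 (F : {set {set 'I_n}}) x : (x \in E :\: F) = (x \notin F) && (x \in E).
Proof. by rewrite inE. Qed.

Lemma e_val (a b : 'I_n) : (a : nat).+1 = b -> e a = [set a; b].
Proof. by move=> h; rewrite /e h !inord_val. Qed.

Lemma eDF (F : {set {set 'I_n}}) i : i.+1 < n -> e i \notin F ->
  [set inord i; inord i.+1] \in E :\: F.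
Proof. move=> hi hF; have := e_in hi; rewrite /e in hF * => h; by rewrite inE2 hF h. Qed.

Lemma big_case (hm : 3 <= m) : bOCD E = (m.+3) %/ 3 - 1.
Proof.
set k := (m.+3) %/ 3 - 1.
have hsub F : E :\: F \subset path_edges n by apply: subsetDl.
have rE : run4 E.
  exists (inord 0), (inord 1), (inord 2), (inord 3).
  rewrite !inordK; try lia.
  split => //; split; apply: e_in; lia.
have [gE1 _ _] := gamma_ge (subxx E).
have gE2 := gamma_le_run rE.
have lb F : ~ run4 (E :\: F) -> k <= #|F|.
  move=> nr.
  pose p j := if e (3 * j) \in F then 3 * j else if e (3 * j).+1 \in F then (3 * j).+1 else (3 * j).+2.
  have pb j : 3 * j <= p j <= (3 * j).+2.
    by rewrite /p; case: (e (3 * j) \in F); case: (e (3 * j).+1 \in F); apply/andP; split; lia.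
  apply: (count_lb (p := p)) => [j hj|j1 j2 _ _ h].
  2: by have := pb j1; have := pb j2; rewrite h; lia.
    have hj3 : 3 * j + 3 <= m by rewrite /k in hj; lia.
    split; first by have := pb j; lia.
    rewrite /p; case: ifP => // h1; case: ifP => // h2.
    case: (boolP (e (3 * j).+2 \in F)) => // h3; exfalso; apply: nr.
    exists (inord (3 * j)), (inord (3 * j).+1), (inord (3 * j).+2), (inord (3 * j).+3).
    rewrite !inordK; try lia. split => //; split; apply: eDF; rewrite ?h1 ?h2 //; lia.
apply: bOCD_eq.
- move=> F sF c; apply: lb => r.
  have := gamma_le_run r; lia.
- apply: leq_trans (leqnSn _); apply: lb => -[a [b [c [d [_ _ _ [h _ _]]]]]].
  by rewrite setDv inE in h.
- exists [set e (3 * (nat_of_ord j)).+2 | j in 'I_k]; split.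
  + apply/subsetP => x /imsetP [j _ ->]; apply: e_in.
    have := ltn_ord j; rewrite /k; lia.
  + have nr : ~ run4 (E :\: [set e (3 * (nat_of_ord j)).+2 | j in 'I_k]).
      move=> [a [b [c [d [hab hbc hcd [h1 h2 h3]]]]]].
      have hd := ltn_ord d.
      have ha := divn_eq a 3; have hr : a %% 3 < 3 := ltn_pmod _ (isT : 0 < 3).
      have hq : ((a : nat) %/ 3).+2 <= m.+3 %/ 3.
        rewrite -(mulKn ((a : nat) %/ 3).+2 (isT : 0 < 3)); apply: leq_div2r.
        move: ((a : nat) %/ 3) ((a : nat) %% 3) ha hr => q r ha hr; lia.
      have hj : (a : nat) %/ 3 < k by rewrite /k; move: hq; move: (m.+3 %/ 3) => t; lia.
      have hin : e (3 * (Ordinal hj)).+2 \in [set e (3 * (nat_of_ord j)).+2 | j in 'I_k].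
        by apply: imset_f.
      rewrite /= in hin.
      have : [\/ (c : nat) = (3 * (a %/ 3)).+2, (b : nat) = (3 * (a %/ 3)).+2 |
                 (a : nat) = (3 * (a %/ 3)).+2].
        move: hin; move: ((a : nat) %/ 3) ((a : nat) %% 3) ha hr => q r ha hr _.
        by case: r ha hr => [|[|[|r]]] ha hr; [constructor 1|constructor 2|constructor 3|]; lia.
      case => h.
      * by move: h3; rewrite inE2 -(e_val hcd) h hin.
      * by move: h2; rewrite inE2 -(e_val hbc) h hin.
      * by move: h1; rewrite inE2 -(e_val hab) h hin.
    have [_ g2 _] := gamma_ge (hsub [set e (3 * (nat_of_ord j)).+2 | j in 'I_k]).
    have := g2 nr; lia.
  + by apply: leq_trans (leq_imset_card _ _) _; rewrite card_ord.
Qed.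

Lemma small_case (hm1 : 1 <= m) (hm : m < 3) : bOCD E = m.
Proof.
have hsub F : E :\: F \subset path_edges n by apply: subsetDl.
have hnr (E' : {set {set 'I_n}}) : ~ run4 E'.
  move=> [a [b [c [d [hab hbc hcd _]]]]]; have := ltn_ord d; lia.
have [_ gE1 _] := gamma_ge (subxx E).
have gE1' := gE1 (hnr E).
have gE2 : gamma_oc E <= n - 1.
  apply: (@gamma_le_edge _ _ (inord 0) (inord 1)).
    by rewrite -(inj_eq val_inj) /= !inordK.
  by apply: (e_in (i := 0)).
have lb F : (forall x, x \notin E :\: F) -> m <= #|F|.
  move=> hF; apply: (count_lb (p := id)) => // j hj; split => //.
  case: (boolP (e j \in F)) => // h; have := hF (e j).
  by rewrite inE2 h e_in.
apply: bOCD_eq.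
- move=> F sF c; apply: lb => x; apply/negP => hx.
  have := subsetP (hsub F) _ hx => /path_edgesP [i [j [hij ex]]].
  have nij : i != j by apply/negP => /eqP h; move: hij; rewrite h => /esym /n_Sn.
  rewrite ex in hx; have := gamma_le_edge nij hx; lia.
- by apply: leq_trans (leqnSn _); apply: lb => x; rewrite setDv inE.
- exists E; split => //.
    have [_ _ g3] := gamma_ge (hsub E).
    have := g3 (ltac:(by move=> x; rewrite setDv inE)); lia.
  have : E \subset [set e (nat_of_ord j) | j in 'I_m].
    apply/subsetP => x /path_edgesP [i [j [hij ->]]].
    have hij' : (nat_of_ord i).+1 = nat_of_ord j := hij.
    have hi : (nat_of_ord i) < m by have := ltn_ord j; lia.
    rewrite -(e_val hij); by apply/imsetP; exists (Ordinal hi).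
  move/subset_leq_card => h; apply: leq_trans h _.
  by apply: leq_trans (leq_imset_card _ _) _; rewrite card_ord.
Qed.
End M.

Theorem mainTheorem10 (n : nat) (hn : 2 <= n) :
  bOCD (path_edges n) =
    if n == 2 then 1
    else if n == 3 then 2
    else (n + 2) %/ 3 - 1.
Proof.
case: n hn => [//|m] hn.
case: (ltnP m 3) => hm.
  rewrite small_case //; case: m hn hm => [|[|[|]]] //.
rewrite big_case //; case: m hn hm => [|[|[|m]]] //= _ _.
by rewrite addnC.
Qed.
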